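(* Let $\omega\in L^1[0,1]$ be real-valued with $\omega\ge 0$ a.e. on $[0,1]$ and $\int_0^1\omega(x)\,dx>0$. Fix $c_1\ge 0$ and $c_2\in\mathbb{R}$, not both zero. For each $\lambda\ge 0$ let $\theta(\cdot;\lambda)$ be the absolutely continuous solution on $[0,1]$ of $$\theta'(x;\lambda)=\sqrt{\lambda}\big(\cos^2\theta(x;\lambda)+\omega(x)\sin^2\theta(x;\lambda)\big)\quad\text{a.e. on }[0,1],$$ with initial value $\theta(0;\lambda)=\arctan\frac{\sqrt{\lambda}c_1}{c_2}\in[0,\pi)$. Then $\lim_{\lambda\to+\infty}\theta(1;\lambda)=+\infty$, and for every fixed $\lambda\ge 0$ the function $x\mapsto\theta(x;\lambda)$ is nondecreasing on $[0,1]$.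
   Context: Here $\theta(0;\lambda)$ is the angle in $[0,\pi)$ whose tangent is $\sqrt{\lambda}c_1/c_2$ (equal to $\pi/2$ when $c_2=0$); $\theta$ is the (elliptic) Prüfer angle of the solution of $-y''=\lambda\omega y$, $y(0)=c_1$, $y'(0)=c_2$. *)

(* Defs.v *)
From HB Require Import structures.
From mathcomp Require Import all_boot all_order all_algebra.
From mathcomp Require Import all_classical all_reals all_analysis.
Set Implicit Arguments. Unset Strict Implicit. Unset Printing Implicit Defensive.
Import Order.TTheory GRing.Theory Num.Theory.
Import numFieldNormedType.Exports.
Local Open Scope classical_set_scope.
Local Open Scope ring_scope.

Definition abs_cont_on (R : realType) (a b : R) (f : R -> R) : Prop :=
  forall e : R, 0 < e -> exists2 d : R, 0 < d &
    forall (n : nat) (u v : nat -> R),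
      (forall i, (i < n)%N -> a <= u i /\ u i <= v i /\ v i <= b) ->
      (forall i j, (i < j)%N -> (j < n)%N -> v i <= u j) ->
      \sum_(i < n) (v i - u i) < d ->
      \sum_(i < n) `|f (v i) - f (u i)| < e.

Definition theta0 (R : realType) (c1 c2 lam : R) : R :=
  if c2 == 0 then pi / 2
  else let a := atan (Num.sqrt lam * c1 / c2) in
       if a < 0 then a + pi else a.

(* Main.v *)
Require Import Defs.
From HB Require Import structures.
From mathcomp Require Import all_boot all_order all_algebra.
From mathcomp Require Import all_classical all_reals all_analysis.
From mathcomp Require Import measurable_realfun ring lra.
Import Order.TTheory GRing.Theory Num.Theory.
Import numFieldNormedType.Exports.
Local Open Scope classical_set_scope.
Local Open Scope ring_scope.

Set Implicit Arguments. Unset Strict Implicit. Unset Printing Implicit Defensive.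
Lemma gauge_good (R : realType) (f : R -> R) (t e : R) :
  derivable f t 1 -> 0 <= derive1 f t -> 0 < e ->
  exists2 r : R, 0 < r & forall u v, u <= t -> t <= v -> t - u < r -> v - t < r ->
    - (e * (v - u)) <= f v - f u.
Proof.
move=> df f0 e0.
have := @cvgr_gt _ _ _ _ _ _ df (- e).
rewrite -/(derive f t 1) -derive1E => H.
have ne0 : - e < 0 by rewrite oppr_lt0.
have := H _ (lt_le_trans ne0 f0) => -[r /= r0 Hr].
exists r => // u v ut tv tur vtr.
have key : forall h, `|h| < r -> h != 0 -> - e < h^-1 * (f (h + t) - f t).
  move=> h hr h0; have := Hr h; rewrite /ball_ /= sub0r normrN => /(_ hr h0).
  by rewrite /= /GRing.scale /= mulr1.
have A : - (e * (v - t)) <= f v - f t.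
  have [->|vt] := eqVneq v t; first by rewrite !subrr mulr0 oppr0.
  have vt' : 0 < v - t by rewrite subr_gt0 lt_def vt tv.
  have := key (v - t); rewrite gtr0_norm // => /(_ vtr).
  rewrite subr_eq0 vt subrK => /(_ isT).
  rewrite -(ltr_pM2l vt') mulrA mulfV ?gt_eqF // mul1r mulrN => /ltW.
  by rewrite mulrC.
have B : - (e * (t - u)) <= f t - f u.
  have [->|ut'] := eqVneq u t; first by rewrite !subrr mulr0 oppr0.
  have tu' : 0 < t - u by rewrite subr_gt0 lt_def eq_sym ut' ut.
  have hn : `|u - t| = t - u by rewrite distrC ger0_norm ?subr_ge0.
  have := key (u - t); rewrite hn => /(_ tur); rewrite subr_eq0 ut' subrK => /(_ isT).
  rewrite -opprB invrN mulNr ltrNr opprK.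
  rewrite -(ltr_pM2l tu') mulrA mulfV ?gt_eqF // mul1r => /ltW.
  by rewrite lerNl opprB mulrC.
have -> : f v - f u = (f v - f t) + (f t - f u) by rewrite addrA subrK.
have -> : - (e * (v - u)) = - (e * (v - t)) + - (e * (t - u)).
  by rewrite -opprD -mulrDr addrA subrK.
exact: lerD.
Qed.

Lemma mu_itv_oc (R : realType) (u v : R) : u <= v ->
  (lebesgue_measure : measure _ R) [set` `]u, v]] = (v - u)%:E.
Proof.
move=> uv; have := lebesgue_measure_itv `]u, v]; rewrite /= => ->; rewrite lte_fin.
case: ifPn => [_|]; first by rewrite EFinB.
rewrite -leNgt => vu.
have -> : v = u by apply/le_anti; rewrite vu uv.
by rewrite subrr.
Qed.

Lemma sum_len_le (R : realType) (U : set R) (n : nat) (u v : nat -> R) (b : R) :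
  measurable U ->
  (forall i, (i < n)%N -> u i <= v i /\ v i <= b) ->
  (forall i j, (i < j)%N -> (j < n)%N -> v i <= u j) ->
  (forall i, (i < n)%N -> [set` `]u i, v i]] `<=` U) ->
  ((\sum_(i < n) (v i - u i))%:E <= (lebesgue_measure : measure _ R) (U `&` [set` `]-oo, b]]))%E.
Proof.
move=> mU; elim: n b => [|n IH] b Huv Hord Hsub.
  by rewrite big_ord0 measure_ge0.
rewrite big_ord_recr /= EFinD.
have [unvn vnb] := Huv n (ltnSn n).
have IH' := IH (u n) (fun i ilt => conj (Huv i (leqW ilt)).1
   (Hord i n ilt (ltnSn n))) (fun i j ij jn => Hord i j ij (leqW jn))
   (fun i ilt => Hsub i (leqW ilt)).
rewrite -(mu_itv_oc unvn).
have mA : measurable (U `&` [set` `]-oo, u n]]) by apply: measurableI.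
have mB : measurable [set` `]u n, v n]] by [].
have muAB := measureU (lebesgue_measure : measure _ R) mA mB.
apply: le_trans (leeD IH' (lexx _)) _.
rewrite -muAB; last first.
  apply/seteqP; split => x //= [[_]]; rewrite /= !in_itv /= => xu /andP[ux _].
  by move: (lt_le_trans ux xu); rewrite ltxx.
apply: le_measure; rewrite ?inE //; first exact: measurableU.
  by apply: measurableI.
move=> x [[Ux]|]; rewrite /= !in_itv /=.
  by move=> xu; split => //; rewrite (le_trans xu (le_trans unvn vnb)).
move=> /andP[ux xv]; split.
  by apply: (Hsub n (ltnSn n) x); rewrite /= in_itv /= ux xv.
by rewrite (le_trans xv vnb).
Qed.

Lemma mono_ac (R : realType) (f : R -> R) (N : set R) :
  (forall e : R, 0 < e -> exists2 d : R, 0 < d &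
    forall (n : nat) (u v : nat -> R),
      (forall i, (i < n)%N -> 0 <= u i /\ u i <= v i /\ v i <= 1) ->
      (forall i j, (i < j)%N -> (j < n)%N -> v i <= u j) ->
      \sum_(i < n) (v i - u i) < d ->
      \sum_(i < n) `|f (v i) - f (u i)| < e) ->
  measurable N -> (lebesgue_measure : measure _ R) N = 0%E ->
  (forall t, 0 <= t -> t <= 1 -> ~ N t -> derivable f t 1 /\ 0 <= derive1 f t) ->
  forall x y, 0 <= x -> x <= y -> y <= 1 -> f x <= f y.
Proof.
move=> AC mN N0 Hd x y x0 xy y1.
have key : forall e, 0 < e -> f x <= f y + (e + e).
  move=> e e0.
  have [d d0 Hac] := AC e e0.
  have Nfin : ((lebesgue_measure : measure _ R) N < +oo)%E by rewrite N0 ltry.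
  have [U [oU NU UNd]] := lebesgue_regularity_outer mN Nfin d0.
  have mU : measurable U := open_measurable oU.
  have muU : ((lebesgue_measure : measure _ R) U < d%:E)%E.
    have h1 : ((lebesgue_measure : measure _ R) U <= (lebesgue_measure : measure _ R) (U `\` N) + (lebesgue_measure : measure _ R) N)%E.
      apply: le_trans (measureU2 _ _ _); last first.
        exact: mN.
        exact: measurableD.
      apply: le_measure; rewrite ?inE //; first by apply: measurableU => //; exact: measurableD.
      by move=> z Uz; have [Nz|Nz] := pselect (N z); [right|left].
    apply: le_lt_trans h1 _.
    by rewrite N0 adde0.
  pose Q s := exists n (u v : nat -> R),
    [/\ forall i, (i < n)%N -> x <= u i /\ u i <= v i /\ v i <= s,
        forall i j, (i < j)%N -> (j < n)%N -> v i <= u j,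
        forall i, (i < n)%N -> [set` `]u i, v i]] `<=` U &
        f x - e * (s - x) - \sum_(i < n) `|f (v i) - f (u i)| <= f s].
  have Qy : Q y.
    pose S := [set s | (x <= s /\ s <= y) /\ Q s].
    have Sx : S x.
      split; first by split.
      exists 0%N, (fun _ => 0), (fun _ => 0); split => //.
      by rewrite big_ord0 subrr mulr0 !subr0.
    have ubS : ubound S y by move=> s [[_ ]].
    have hS : has_sup S by split; [exists x | exists y].
    set m := sup S.
    have xm : x <= m := sup_upper_bound hS Sx.
    have my : m <= y := ge_sup (ex_intro _ x Sx) ubS.
    have [r r0 Hr] : exists2 r, 0 < r & ((forall z, `|z - m| < r -> U z) \/
        (forall u v, u <= m -> m <= v -> m - u < r -> v - m < r -> - (e * (v - u)) <= f v - f u)).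
      have [Nm|Nm] := pselect (N m).
        have : nbhs m U by apply: open_nbhs_nbhs; split => //; exact: NU.
        move=> /nbhs_ballP [r r0 Hb]; exists r => //; left => z zm.
        by apply: Hb; rewrite /ball /= distrC.
      have [dm fm] := Hd m (le_trans x0 xm) (le_trans my y1) Nm.
      have [r r0 Hg] := gauge_good dm fm e0.
      by exists r => //; right.
    have [s Ss ms] := sup_adherent r0 hS; rewrite -/m in ms.
    have sm : s <= m := sup_upper_bound hS Ss.
    pose t := Num.min (m + r / 2) y.
    have mt : m <= t by rewrite le_min my andbT lerDl divr_ge0 // ltW.
    have tmr : t - m < r.
      have : t <= m + r / 2 by rewrite ge_min lexx.
      have : r / 2 < r by rewrite ltr_pdivrMr // ltr_pMr // ltr1n.
      lra.
    have Qt : Q t.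
      have [[xs sy] [n [u [v [B O Sb I]]]]] := Ss.
      case: Hr => [HU|Hg].
        exists n.+1, (fun i => if i == n then s else u i), (fun i => if i == n then t else v i).
        split.
        - move=> i; rewrite ltnS leq_eqVlt => /orP[/eqP ->|iln]; rewrite ?eqxx.
            by split; [exact: xs | split; [exact: le_trans sm mt | exact: lexx]].
          rewrite ltn_eqF //; have [xu [uv vs]] := B i iln.
          by split => //; split => //; apply: le_trans vs (le_trans sm mt).
        - move=> i j ij; rewrite ltnS leq_eqVlt => /orP[/eqP jn|jln].
            rewrite jn eqxx; rewrite jn in ij; rewrite ltn_eqF //.
            by have [_ [_ ]] := B i ij.
          by rewrite !ltn_eqF ?(ltn_trans ij) //; apply: O.
        - move=> i; rewrite ltnS leq_eqVlt => /orP[/eqP ->|iln]; last by rewrite ltn_eqF //; apply: Sb.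
          rewrite eqxx => z /=; rewrite in_itv /= => /andP[sz zt]; apply: HU.
          rewrite ltr_norml; apply/andP; split; lra.
        - rewrite big_ord_recr /= eqxx.
          under eq_bigr => i _ do rewrite ltn_eqF //.
          have n1 : f s - f t <= `|f t - f s|.
            by rewrite -normrN opprB ler_norm.
          have e1 : e * (s - x) <= e * (t - x).
            by apply: ler_wpM2l; [exact: ltW | lra].
          lra.
      exists n, u, v; split => //.
        move=> i /B [xu [uv vs]]; split => //; split => //.
        by apply: le_trans vs (le_trans sm mt).
      have := Hg s t sm mt _ tmr.
      have -> : m - s < r by lra.
      move=> /(_ isT) hst.
      have e1 : e * (t - x) = e * (s - x) + e * (t - s) by ring.
      lra.
    have St : S t.
      split => //; split; first exact: le_trans xm mt.
      by rewrite ge_min lexx orbT.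
    have tm : t <= m := sup_upper_bound hS St.
    have mty : m = y.
      apply/le_anti; rewrite my /=; rewrite leNgt; apply/negP => mlty.
      have : m < t by rewrite lt_min mlty andbT ltrDl divr_gt0.
      by rewrite ltNge tm.
    have -> : y = t.
      apply/le_anti; rewrite ge_min lexx orbT andbT le_min lexx andbT -mty.
      by rewrite lerDl divr_ge0 // ltW.
    exact: Qt.
  have [n [u [v [B O Sb I]]]] := Qy.
  have lenU : ((\sum_(i < n) (v i - u i))%:E <= (lebesgue_measure : measure _ R) U)%E.
    apply: le_trans (sum_len_le (b := y) mU _ O Sb) _.
      by move=> i /B [_ [h1 h2]]; split.
    apply: le_measure; rewrite ?inE; [by apply: measurableI | exact: mU | by move=> z []].
  have lend : \sum_(i < n) (v i - u i) < d.
    by rewrite -lte_fin; exact: le_lt_trans lenU muU.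
  have Hs : \sum_(i < n) `|f (v i) - f (u i)| < e.
    apply: Hac O lend => i /B [xu [uv vy]]; split; first exact: le_trans x0 xu.
    by split => //; exact: le_trans vy y1.
  have ey : e * (y - x) <= e.
    rewrite -[leRHS]mulr1; apply: ler_wpM2l; first exact: ltW.
    lra.
  lra.
apply/ler_addgt0Pr => e e0; have := key (e/2) (divr_gt0 e0 (ltr0Sn _ 1)).
by rewrite -splitr.
Qed.
Definition ACF (R : realType) (f : R -> R) :=
  forall e : R, 0 < e -> exists2 d : R, 0 < d &
    forall (n : nat) (u v : nat -> R),
      (forall i, (i < n)%N -> 0 <= u i /\ u i <= v i /\ v i <= 1) ->
      (forall i j, (i < j)%N -> (j < n)%N -> v i <= u j) ->
      \sum_(i < n) (v i - u i) < d ->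
      \sum_(i < n) `|f (v i) - f (u i)| < e.

Lemma ac_sub (R : realType) (f G : R -> R) (s : R) : ACF f -> 0 <= s ->
  (forall u v, 0 <= u -> u <= v -> v <= 1 -> `|G v - G u| <= v - u) ->
  ACF (fun t => f t - s * G t).
Proof.
move=> AC s0 LG e e0.
have e20 : 0 < e / 2 by rewrite divr_gt0.
have [d1 d10 H1] := AC _ e20.
have s10 : 0 < s + 1 by lra.
set m := e / 2 / (s + 1).
have m0 : 0 < m by rewrite divr_gt0.
exists (Num.min d1 m); first by rewrite lt_min d10 m0.
move=> n u v B O L.
have L1 : \sum_(i < n) (v i - u i) < d1 by apply: lt_le_trans L _; rewrite ge_min lexx.
have L2 : \sum_(i < n) (v i - u i) < m by apply: lt_le_trans L _; rewrite ge_min lexx orbT.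
have Lf := H1 n u v B O L1.
have H : \sum_(i < n) `|(f (v i) - s * G (v i)) - (f (u i) - s * G (u i))| <=
     \sum_(i < n) `|f (v i) - f (u i)| + s * \sum_(i < n) (v i - u i).
  rewrite mulr_sumr -big_split /=; apply: ler_sum => i _.
  have [u0 [uv v1]] := B i (ltn_ord i).
  have -> : (f (v i) - s * G (v i)) - (f (u i) - s * G (u i)) =
     (f (v i) - f (u i)) - s * (G (v i) - G (u i)) by ring.
  apply: le_trans (ler_normB _ _) _; apply: lerD => //.
  rewrite normrM ger0_norm //; apply: ler_wpM2l => //; exact: LG.
have sm : s * \sum_(i < n) (v i - u i) <= s * m by apply: ler_wpM2l => //; exact: ltW.
have sm1 : s * m <= (s + 1) * m by apply: ler_wpM2r; [exact: ltW | lra].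
have sme : (s + 1) * m = e / 2 by rewrite /m mulrC divfK // gt_eqF.
have : e / 2 + e / 2 = e by rewrite -splitr.
lra.
Qed.


Lemma int_cst1 (R : realType) (u v : R) : u <= v ->
  (lebesgue_measure : measure _ R).-integrable [set` `]u, v]] (EFin \o cst 1).
Proof.
move=> uv; apply/integrableP; split; first exact/measurable_EFinP.
have -> : (\int[(lebesgue_measure : measure _ R)]_(x in [set` `]u, v]]) `|(EFin \o cst 1%R) x|
   = \int[(lebesgue_measure : measure _ R)]_(x in [set` `]u, v]]) (cst 1%E) x)%E.
  by apply: eq_integral => x _; rewrite /= normr1.
by rewrite integral_cst // mu_itv_oc // mul1e ltry.
Qed.

Lemma lower_bound (R : realType) (f w : R -> R) (N : set R) (s : R) :
  (lebesgue_measure : measure _ R).-integrable `[0%R, 1%R] (EFin \o w) ->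
  ACF f -> measurable N -> (lebesgue_measure : measure _ R) N = 0%E -> 0 <= s ->
  (forall t, 0 <= t -> t <= 1 -> ~ N t -> derivable f t 1 /\
      s * ((cst 1) \min ((cst 0) \max w)) t <= derive1 f t) ->
  f 0 + s * (\int[(lebesgue_measure : measure _ R)]_(t in `[0%R, 1%R]) (((cst 1) \min ((cst 0) \max w)) t)) <= f 1.
Proof.
move=> intw AC mN N0 s0 Hd.
set g0 := (cst 1) \min ((cst 0) \max w).
have mw : measurable_fun (`[0%R, 1%R] : set R) w.
  by apply/measurable_EFinP; exact: (measurable_int _ intw).
have mg0 : measurable_fun (`[0%R, 1%R] : set R) g0.
  by apply: measurable_minr; [exact: measurable_cst | apply: measurable_maxr => //; exact: measurable_cst].
have g0b : forall x, 0 <= g0 x /\ g0 x <= 1.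
  move=> x; rewrite /g0 /=; split; first by rewrite le_min ler01 le_max lexx.
  by rewrite ge_min lexx.
have ig0 : (lebesgue_measure : measure _ R).-integrable `[0%R, 1%R] (EFin \o g0).
  apply: le_integrable intw => //; first exact/measurable_EFinP.
  move=> x _; rewrite /= lee_fin ger0_norm; last by have [] := g0b x.
  rewrite /g0 /= ge_min; apply/orP; right; rewrite ge_max normr_ge0 /=.
  exact: ler_norm.
set g := g0 \_ (`[0%R, 1%R] : set R).
have gE : forall x, 0 <= x -> x <= 1 -> g x = g0 x.
  by move=> x x0 x1; rewrite /g patchE mem_set //= in_itv /= x0 x1.
have g_ge0 : forall x, 0 <= g x.
  by move=> x; rewrite /g patchE; case: ifPn => _ //; have [] := g0b x.
have g_le1 : forall x, g x <= 1.
  by move=> x; rewrite /g patchE; case: ifPn => _ //; have [] := g0b x.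
have ig : forall y, (lebesgue_measure : measure _ R).-integrable
    [set` Interval (BLeft 0%R) (BRight y)] (EFin \o g).
  move=> y; rewrite /g -restrict_EFin; apply/integrable_restrict => //.
  apply: integrableS ig0 => //; first exact: measurableI.
have lg : locally_integrable [set: R] g by apply: integrable_locally.
have := FTC1 ig lg.
move=> [N3 [mN3 N30 N3S]].
have N30b : (lebesgue_measure : measure _ R) N3 = 0%E := N30.
set G := fun x => (\int[(lebesgue_measure : measure _ R)]_(t in [set` Interval (BLeft 0%R) (BRight x)]) (g t))%R.
have GL : forall u v, 0 <= u -> u <= v -> v <= 1 -> `|G v - G u| <= v - u.
  move=> u v u0 uv v1.
  have -> : G v - G u = (\int[(lebesgue_measure : measure _ R)]_(x in [set` Interval (BRight u) (BRight v)]) g x)%R.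
    by rewrite /G Rintegral_itvB // ?bnd_simp.
  have iuv : (lebesgue_measure : measure _ R).-integrable [set` `]u, v]] (EFin \o g).
    apply: integrableS (ig v) => //.
    move=> z; rewrite /= !in_itv /= => /andP[uz zv]; rewrite zv andbT.
    exact: le_trans u0 (ltW uz).
  rewrite ger0_norm; last by apply: Rintegral_ge0 => x _; exact: g_ge0.
  apply: le_trans (le_Rintegral _ iuv (int_cst1 uv) _) _ => //.
  by rewrite Rintegral_cst // mu_itv_oc // /= mul1r.
set h := f - s \*: G.
have ACh : ACF h by exact: ac_sub AC s0 GL.
have mNN : measurable (N `|` N3 `|` [set 0%R]) by apply: measurableU => //; exact: measurableU.
have NN0 : (lebesgue_measure : measure _ R) (N `|` N3 `|` [set 0%R]) = 0%E.
  apply/le_anti; rewrite measure_ge0 andbT.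
  have H : ((lebesgue_measure : measure _ R) (N `|` N3) <= (lebesgue_measure : measure _ R) N + (lebesgue_measure : measure _ R) N3)%E.
    exact: measureU2.
  rewrite N0 N30b adde0 in H.
  have H' : ((lebesgue_measure : measure _ R) (N `|` N3 `|` [set 0%R]) <= (lebesgue_measure : measure _ R) (N `|` N3) + (lebesgue_measure : measure _ R) [set 0%R])%E.
    by apply: measureU2 => //; exact: measurableU.
  have H0 : (lebesgue_measure : measure _ R) (N `|` N3) = 0%E by apply/le_anti; rewrite H measure_ge0.
  have S1 : (lebesgue_measure : measure _ R) [set 0%R] = 0%E by exact: lebesgue_measure_set1.
  by rewrite H0 S1 adde0 in H'.
have := mono_ac ACh mNN NN0 _ (lexx 0) ler01 (lexx 1).
have G0 : G 0 = 0.
  by rewrite /G set_itv1 Rintegral_set1.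
have G1 : G 1 = \int[(lebesgue_measure : measure _ R)]_(t in `[0%R, 1%R]) g0 t.
  rewrite /G; apply: eq_Rintegral => x; rewrite inE /= in_itv /= => /andP[x0 x1].
  exact: gE.
have hE : forall t, h t = f t - s * G t by [].
move=> H.
have : f 0 <= f 1 - s * \int[(lebesgue_measure : measure _ R)]_(t in `[0%R, 1%R]) g0 t.
  move: H; rewrite !hE G0 G1 mulr0 subr0; apply => t t0 t1 /not_orP [/not_orP [Nt N3t] tn0].
  have tpos : 0 < t by rewrite lt_def t0 andbT; apply/eqP => t0'; apply: tn0; rewrite t0'.
  have [df fd] := Hd t t0 t1 Nt.
  have PG := contrapT (fun nP => N3t (N3S t nP)).
  move: PG => PG.
  have PG' : 0 < t -> derivable G t 1 /\ derive1 G t = g t.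
    by move=> tp; apply: PG; rewrite /= lte_fin.
  have [dG Gd] := PG' tpos.
  split; first by apply: derivableB => //; apply: derivableZ.
  rewrite derive1E deriveB //; last by apply: derivableZ.
  rewrite deriveZ // -!derive1E Gd gE //.
  rewrite subr_ge0; exact: fd.
lra.
Qed.
Lemma null_union (R : realType) (A B : set R) : measurable A -> measurable B ->
  (lebesgue_measure : measure _ R) A = 0%E -> (lebesgue_measure : measure _ R) B = 0%E ->
  (lebesgue_measure : measure _ R) (A `|` B) = 0%E.
Proof.
move=> mA mB A0 B0; apply/le_anti; rewrite measure_ge0 andbT.
have H : ((lebesgue_measure : measure _ R) (A `|` B) <= (lebesgue_measure : measure _ R) A + (lebesgue_measure : measure _ R) B)%E.
  exact: measureU2.
by rewrite A0 B0 adde0 in H.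
Qed.

Lemma theta0_ge0 (R : realType) (c1 c2 lam : R) : 0 <= theta0 c1 c2 lam.
Proof.
rewrite /theta0; case: ifPn => _.
  by rewrite divr_ge0 // ?pi_ge0.
case: ifPn => [a0|]; last by rewrite -leNgt.
have := atan_gtNpi2 (Num.sqrt lam * c1 / c2).
have := pi_gt0 R.
lra.
Qed.

Lemma g0_le (R : realType) (w c s : R) : 0 <= w -> c ^+ 2 + s ^+ 2 = 1 ->
  Num.min 1 (Num.max 0 w) <= c ^+ 2 + w * s ^+ 2.
Proof.
move=> w0 cs; have -> : Num.max 0 w = w by apply/max_idPr.
have c0 : 0 <= c ^+ 2 by exact: sqr_ge0.
have s0 : 0 <= s ^+ 2 by exact: sqr_ge0.
have [w1|w1] := leP w 1.
  nra.
nra.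
Qed.

Unset Implicit Arguments.
Theorem lemma3p1 (R : realType) (omega : R -> R) (c1 c2 : R)
  (theta : R -> R -> R) (* theta lam x = theta(x; lambda) *) :
  (lebesgue_measure : measure _ R).-integrable `[0%R, 1%R] (EFin \o omega) ->
  {ae (lebesgue_measure : measure _ R), forall x, x \in `[0, 1] -> 0 <= omega x} ->
  (0%E < \int[(lebesgue_measure : measure _ R)]_(x in `[0%R, 1%R]) (omega x)%:E)%E ->
  0 <= c1 -> (c1 != 0) || (c2 != 0) ->
  (forall lam : R, 0 <= lam ->
     [/\ abs_cont_on 0 1 (theta lam),
         {ae (lebesgue_measure : measure _ R), forall x, x \in `[0, 1] ->
            derivable (theta lam) x 1 /\
            derive1 (theta lam) x =
              Num.sqrt lam * (cos (theta lam x) ^+ 2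
                              + omega x * sin (theta lam x) ^+ 2)}
       & theta lam 0 = theta0 c1 c2 lam]) ->
  (theta^~ 1 @ +oo --> +oo) /\
  (forall lam : R, 0 <= lam -> forall x y : R,
     0 <= x -> x <= y -> y <= 1 -> theta lam x <= theta lam y).
Proof.
move=> intw wge0 intpos c10 c12 Hth.
have [Nw [mNw Nw0 NwS]] := wge0.
have Nw0' : (lebesgue_measure : measure _ R) Nw = 0%E := Nw0.
have wpt : forall t, 0 <= t -> t <= 1 -> ~ Nw t -> 0 <= omega t.
  move=> t t0 t1 Nt; apply: contrapT => H; apply: Nt; apply: NwS => /=.
  by move=> P; apply: H; apply: P; rewrite in_itv /= t0 t1.
have dpt : forall lam, 0 <= lam -> exists2 Nd : set R, measurable Nd /\ (lebesgue_measure : measure _ R) Nd = 0%E &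
    forall t, 0 <= t -> t <= 1 -> ~ Nd t -> derivable (theta lam) t 1 /\
            derive1 (theta lam) t =
              Num.sqrt lam * (cos (theta lam t) ^+ 2
                              + omega t * sin (theta lam t) ^+ 2).
  move=> lam lam0; have [_ [Nd [mNd Nd0 NdS]] _] := Hth lam lam0.
  exists Nd; first by split.
  move=> t t0 t1 Nt; apply: contrapT => H; apply: Nt; apply: NdS => /=.
  by move=> P; apply: H; apply: P; rewrite in_itv /= t0 t1.
split; last first.
  move=> lam lam0 x y x0 xy y1.
  have [AC _ _] := Hth lam lam0.
  have [Nd [mNd Nd0] Hd] := dpt lam lam0.
  apply: (mono_ac (N := Nw `|` Nd)) => //.
  - exact: measurableU.
  - exact: null_union.
  move=> t t0 t1 /not_orP [Nwt Ndt].
  have [dt ->] := Hd t t0 t1 Ndt; split => //.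
  apply: mulr_ge0; first exact: sqrtr_ge0.
  apply: addr_ge0; first exact: sqr_ge0.
  by apply: mulr_ge0; [exact: wpt | exact: sqr_ge0].
set g0 := (cst 1) \min ((cst 0) \max omega).
set c := (\int[(lebesgue_measure : measure _ R)]_(t in `[0%R, 1%R]) g0 t)%R.
have lb : forall lam, 0 <= lam -> Num.sqrt lam * c <= theta lam 1.
  move=> lam lam0; have [AC _ Hi] := Hth lam lam0.
  have [Nd [mNd Nd0] Hd] := dpt lam lam0.
  have mU : measurable (Nw `|` Nd) by exact: measurableU.
  have := lower_bound intw AC mU (null_union mNw mNd Nw0' Nd0) (sqrtr_ge0 lam).
  move=> /(_ _) H; have {}H := H _.
  have H0 := theta0_ge0 c1 c2 lam.
  have : theta lam 0 + Num.sqrt lam * c <= theta lam 1.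
    apply: H => t t0 t1 /not_orP [Nwt Ndt].
    have [dt ->] := Hd t t0 t1 Ndt; split => //.
    apply: ler_wpM2l; first exact: sqrtr_ge0.
    exact: g0_le (wpt t t0 t1 Nwt) (cos2Dsin2 _).
  rewrite Hi; lra.
have cpos : 0 < c.
  have g0b : forall x, 0 <= g0 x.
    by move=> x; rewrite /g0 /= le_min ler01 le_max lexx.
  have c0 : 0 <= c by apply: Rintegral_ge0 => x _; exact: g0b.
  rewrite lt_def c0 andbT; apply/eqP => c00.
  have mw : measurable_fun (`[0%R, 1%R] : set R) omega.
    by apply/measurable_EFinP; exact: (measurable_int _ intw).
  have mg0 : measurable_fun (`[0%R, 1%R] : set R) g0.
    by apply: measurable_minr; [exact: measurable_cst | apply: measurable_maxr => //; exact: measurable_cst].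
  have ig0 : (lebesgue_measure : measure _ R).-integrable `[0%R, 1%R] (EFin \o g0).
    apply: le_integrable intw => //; first exact/measurable_EFinP.
    move=> x _; rewrite /= lee_fin ger0_norm; last exact: g0b.
    rewrite /g0 /= ge_min; apply/orP; right; rewrite ge_max normr_ge0 /=.
    exact: ler_norm.
  have Eabs : (\int[(lebesgue_measure : measure _ R)]_(x in `[0%R, 1%R]) `|(EFin \o g0) x| =
              \int[(lebesgue_measure : measure _ R)]_(x in `[0%R, 1%R]) (EFin \o g0) x)%E.
    by apply: eq_integral => x _; rewrite /= ger0_norm.
  have I0 : (\int[(lebesgue_measure : measure _ R)]_(x in `[0%R, 1%R]) `|(EFin \o g0) x| = 0)%E.
    rewrite Eabs.
    have fin : (\int[(lebesgue_measure : measure _ R)]_(x in `[0%R, 1%R]) (EFin \o g0) x)%E \is a fin_num.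
      rewrite ge0_fin_numE; last by apply: integral_ge0 => x _; rewrite lee_fin.
      by rewrite -Eabs; case/integrableP: ig0.
    by rewrite -(fineK fin) -/(Rintegral _ _ _) -/c c00.
  have mD01 : measurable (`[0%R, 1%R] : set R) by exact: measurable_itv.
  have ae1 := (ae_eq_integral_abs (lebesgue_measure : measure _ R) mD01 (proj2 (measurable_EFinP _ _) mg0)).1 I0.
  have ae2 : ae_eq (lebesgue_measure : measure _ R) ([set` `[0%R, 1%R]] : set R) (EFin \o omega) (cst 0%E).
    have [Ng [mNg Ng0 NgS]] := ae1.
    have Ng0' : (lebesgue_measure : measure _ R) Ng = 0%E := Ng0.
    exists (Ng `|` Nw); split; [exact: measurableU | exact: null_union |].
    move=> t /= nP; apply: contrapT => /not_orP [Ngt Nwt]; apply: nP => tD.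
    have [t0 t1] : 0 <= t /\ t <= 1 by move: tD; rewrite /= in_itv /= => /andP.
    have g0t : (EFin \o g0) t = cst 0%E t.
      by apply: contrapT => h; apply: Ngt; apply: NgS => /=; move=> P; apply: h; apply: P.
    have wt := wpt t t0 t1 Nwt.
    move: g0t => /= /eqP; rewrite eqe /g0 /= => /eqP g0t.
    congr EFin; apply/le_anti; rewrite wt andbT leNgt; apply/negP => wpos.
    have : 0 < Num.min 1 (Num.max 0 (omega t)) by rewrite lt_min ltr01 lt_max wpos orbT.
    by rewrite g0t ltxx.
  have H0 : (\int[(lebesgue_measure : measure _ R)]_(x in `[0%R, 1%R]) (omega x)%:E =
             \int[(lebesgue_measure : measure _ R)]_(x in `[0%R, 1%R]) (cst 0%E) x)%E.
    apply: ae_eq_integral => //.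
    exact: (measurable_int _ intw).
  rewrite integral0 in H0.
  by move: intpos; rewrite H0 ltxx.
apply/cvgryPge => A.
exists ((Num.max 0 (A / c)) ^+ 2); split; first exact: num_real.
move=> lam Hlam.
have lam0 : 0 <= lam by apply: le_trans (ltW Hlam); exact: sqr_ge0.
apply: le_trans (lb lam lam0).
have m0 : 0 <= Num.max 0 (A / c) by rewrite le_max lexx.
have : Num.max 0 (A / c) <= Num.sqrt lam.
  by rewrite -(ger0_norm m0) -sqrtr_sqr ler_sqrt // ltW.
have : A / c <= Num.max 0 (A / c) by rewrite le_max lexx orbT.
move=> h1 h2.
have : A / c * c <= Num.sqrt lam * c.
  by apply: ler_wpM2r; [exact: ltW | exact: le_trans h1 h2].
by rewrite divfK // gt_eqF.
Qed.
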